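(* If $\mathbf{h}$ has a fixed point, the modified Jacobi-type iteration corresponding to $\mathbf{x}^{n+1} = \mathbf{h}(\mathbf{x}^n)$ converges in at most $m/b^2$ iterations from any initial guess $\mathbf{x}^0$. ($m$ is the number of nonzero entries in all blocks in the sparsity pattern $S_B$ and $b$ is the block size.)
   Context: Let $\mathbf{A}\in\mathbb{R}^{n\times n}$ be partitioned into square $b\times b$ blocks, and $S_B$ a set of block indices containing all diagonal blocks. The unknowns (entries of the block ILU factors $\mathbf{L}_{ij}$, $i>j$, and $\mathbf{U}_{ij}$, $i\le j$, for $(i,j)\in S_B$) form $\mathbf{x}\in\mathbb{R}^m$, $m=|S_B|b^2$, with $\mathbf{X}_{ij}$ the $b\times b$ block for index $(i,j)$. The map $\mathbf{h}:D_B\to\mathbb{R}^m$ is given blockwise by $\mathbf{H}_{ij}(\mathbf{x})=(\mathbf{A}_{ij}-\sum_{k=1}^{j-1}\mathbf{X}_{ik}\mathbf{X}_{kj})\mathbf{X}_{jj}^{-1}$ for $i>j$ and $\mathbf{H}_{ij}(\mathbf{x})=\mathbf{A}_{ij}-\sum_{k=1}^{i-1}\mathbf{X}_{ik}\mathbf{X}_{kj}$ for $i\le j$, on $D_B:=\{\mathbf{x}: \mathbf{X}_{jj}\text{ nonsingular for all diagonal blocks}\}$. The modified Jacobi-type iteration is the synchronous iteration $\mathbf{x}^{n+1}=\mathbf{h}(\mathbf{x}^n)$ except that whenever a diagonal block $\mathbf{X}_{jj}$ becomes singular, it is replaced by an arbitrary nonsingular matrix. *)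

(* Defs.v *)
From HB Require Import structures.
From mathcomp Require Import all_boot all_order all_algebra.
Set Implicit Arguments. Unset Strict Implicit. Unset Printing Implicit Defensive.
Import Order.TTheory GRing.Theory Num.Theory.
Local Open Scope ring_scope.

(* The block X_ij of the unknown vector, zero outside the pattern S_B
   (blocks outside the pattern are not unknowns and do not contribute). *)
Definition Xblk (R : fieldType) (nb b : nat) (S : {set 'I_nb * 'I_nb})
    (x : 'I_nb -> 'I_nb -> 'M[R]_b) (i j : 'I_nb) : 'M[R]_b :=
  if (i, j) \in S then x i j else 0.

Definition Hblk (R : fieldType) (nb b : nat) (A : 'I_nb -> 'I_nb -> 'M[R]_b)
    (S : {set 'I_nb * 'I_nb}) (x : 'I_nb -> 'I_nb -> 'M[R]_b) (i j : 'I_nb)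
    : 'M[R]_b :=
  let s := \sum_(k < nb | (k < minn i j)%N) (Xblk S x i k *m Xblk S x k j) in
  if (j < i)%N then (A i j - s) *m invmx (x j j) else A i j - s.

Definition in_DB (R : fieldType) (nb b : nat) (x : 'I_nb -> 'I_nb -> 'M[R]_b) :=
  forall j : 'I_nb, x j j \in unitmx.

Definition is_fixed_point (R : fieldType) (nb b : nat)
    (A : 'I_nb -> 'I_nb -> 'M[R]_b) (S : {set 'I_nb * 'I_nb})
    (x : 'I_nb -> 'I_nb -> 'M[R]_b) :=
  in_DB x /\ forall i j, (i, j) \in S -> x i j = Hblk A S x i j.

(* xs is a run of the modified Jacobi-type iteration x^{n+1} = h(x^n):
   every iterate lies in D_B (a singular diagonal block is replaced by an
   arbitrary nonsingular one), off-diagonal pattern blocks are updated by h,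
   and a diagonal block is updated by h whenever the new value is nonsingular. *)
Definition modified_jacobi (R : fieldType) (nb b : nat)
    (A : 'I_nb -> 'I_nb -> 'M[R]_b) (S : {set 'I_nb * 'I_nb})
    (xs : nat -> 'I_nb -> 'I_nb -> 'M[R]_b) :=
  forall n : nat,
    in_DB (xs n) /\
    (forall i j, (i, j) \in S -> i != j -> xs n.+1 i j = Hblk A S (xs n) i j) /\
    (forall j, Hblk A S (xs n) j j \in unitmx -> xs n.+1 j j = Hblk A S (xs n) j j).

(* Main.v *)
Require Import Defs.
From HB Require Import structures.
From mathcomp Require Import all_boot all_order all_algebra.
From Stdlib Require Import ClassicalEpsilon.
From mathcomp Require Import zify.
Import Order.TTheory GRing.Theory Num.Theory.
Local Open Scope ring_scope.

Definition pbool (P : Prop) : bool :=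
  if excluded_middle_informative P then true else false.

Lemma pboolP (P : Prop) : reflect P (pbool P).
Proof. by rewrite /pbool; case: excluded_middle_informative => H; constructor. Qed.

Definition fr {nb : nat} (p : 'I_nb * 'I_nb) : nat :=
  (2 * minn p.1 p.2 + (p.2 < p.1))%N.

Lemma Hblk_eq (R : fieldType) (nb b : nat) (A : 'I_nb -> 'I_nb -> 'M[R]_b)
   (S : {set 'I_nb * 'I_nb}) (x y : 'I_nb -> 'I_nb -> 'M[R]_b) (i j : 'I_nb) :
  (forall j : 'I_nb, (j, j) \in S) ->
  (forall q, q \in S -> (fr q < fr (i, j))%N -> x q.1 q.2 = y q.1 q.2) ->
  Hblk A S x i j = Hblk A S y i j.
Proof.
move=> Sd H; rewrite /Hblk.
have -> : \sum_(k < nb | (k < minn i j)%N) (Xblk S x i k *m Xblk S x k j)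
        = \sum_(k < nb | (k < minn i j)%N) (Xblk S y i k *m Xblk S y k j).
  apply: eq_bigr => k hk; congr (_ *m _); rewrite /Xblk.
    case: ifP => // hS; apply: (H (i, k)) => //; rewrite /fr /=.
    have h1 : (k < i)%N by lia.
    have h2 : (k < j)%N by lia.
    have -> : minn i k = k by apply/minn_idPr; apply: ltnW.
    case: (k < i)%N; lia.
  case: ifP => // hS; apply: (H (k, j)) => //; rewrite /fr /=.
  have h1 : (k < i)%N by lia.
    have h2 : (k < j)%N by lia.
  have -> : minn k j = k by apply/minn_idPl; apply: ltnW.
  case: (j < k)%N; case: (j < i)%N; lia.
case: ifP => // hji; rewrite (H (j, j)) //= /fr /= ltnn hji.
have -> : minn i j = j by apply/minn_idPr; apply: ltnW.
rewrite minnn; lia.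
Qed.

Theorem theorem8 (R : realFieldType) (nb b : nat)
    (A : 'I_nb -> 'I_nb -> 'M[R]_b.+1) (S : {set 'I_nb * 'I_nb})
    (xs : nat -> 'I_nb -> 'I_nb -> 'M[R]_b.+1) :
  (forall j : 'I_nb, (j, j) \in S) ->
  forall xstar, is_fixed_point A S xstar ->
  modified_jacobi A S xs ->
    forall n : nat, (#|S| * b.+1 ^ 2 %/ b.+1 ^ 2 <= n)%N ->
      forall i j, (i, j) \in S -> xs n i j = xstar i j.
Proof.
move=> Sd xstar [xDB xfix] MJ n; rewrite mulnK ?expn_gt0 // => hn.
pose P n (p : 'I_nb * 'I_nb) := forall m, (n <= m)%N -> xs m p.1 p.2 = xstar p.1 p.2.
pose G n := [set p in S | pbool (P n p)].
have GS k : G k \subset S by apply/subsetP => p; rewrite inE => /andP[].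
have Gmono k : G k \subset G k.+1.
  apply/subsetP => p; rewrite !inE => /andP[-> /pboolP hP] /=.
  by apply/pboolP => m hm; apply: hP; apply: ltnW.
have key k : (k <= #|G k|)%N \/ G k = S.
  elim: k => [|k IH]; first by left.
  have [E|NE] := eqVneq (G k) S.
    right; apply/eqP; rewrite eqEsubset GS /=; rewrite -{1}E; exact: Gmono.
  have [p0 hp0] : exists p0, p0 \in S :\: G k.
    apply/set0Pn; rewrite setD_eq0; apply: contra NE => h.
    by rewrite eqEsubset h GS.
  case: (arg_minnP (fr (nb:=nb)) hp0) => p hp hmin.
  have {}hp : p \in S :\: G k by [].
  have {}hmin : forall q, q \in S :\: G k -> (fr p <= fr q)%N by [].
  have pG : p \in G k.+1.
    move: hp hmin; case: p => pi pj hp hmin.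
    move: hp; rewrite inE => /andP[hpG hpS]; rewrite inE hpS /=.
    apply/pboolP => m hm /=.
    have Hm : Hblk A S (xs m.-1) pi pj = Hblk A S xstar pi pj.
      apply: Hblk_eq => // q qS hq.
      have : q \in G k.
        apply: contraT => qG.
        have : q \in S :\: G k by rewrite inE qG qS.
        by move/hmin; rewrite leqNgt hq.
      rewrite inE => /andP[_ /pboolP]; apply; lia.
    have -> : m = m.-1.+1 by lia.
    case: (MJ m.-1) => _ [Hoff Hdiag].
    have [e|ne] := eqVneq pi pj.
      rewrite -e; rewrite -e in Hm hpS.
      by rewrite Hdiag Hm -xfix ?xDB.
    by rewrite Hoff // Hm -xfix.
  left.
  have pnG : p \notin G k by move: hp; rewrite inE => /andP[].
  have : (p |: G k) \subset G k.+1 by rewrite subUset sub1set pG Gmono.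
  move/subset_leq_card; rewrite cardsU1 pnG /= => hc.
  case: IH => [IH|E]; first by rewrite add1n in hc; exact: leq_trans hc.
  by move: NE; rewrite E eqxx.
have GN : G #|S| = S.
  case: (key #|S|) => // h; apply/eqP; rewrite eqEcard GS h.
  done.
move=> i j; rewrite -GN inE => /andP[_ /pboolP]; apply; exact: hn.
Qed.
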